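(* There is an absolute constant $c>0$ such that for every instance $I$ of continuous BGT (with $n\ge2$ and $h_{\max}>h_{\min}$), the schedule produced by Algorithm 2 satisfies $\mathrm{MH}\le c\cdot\log_2\lceil h_{\max}/h_{\min}\rceil\cdot\mathrm{OPT}(I)$. Algorithm 2: let $s=\lfloor\log_2(h_{\max}/h_{\min})\rfloor+1$ and, for $i=1,\dots,s$, $V_i=\{v_j\in V: 2^{i-1}h_{\min}\le h_j<2^i h_{\min}\}$ (with $v_j$ of rate $h_j=2^s h_{\min}$ impossible, so the $V_i$ partition $V$). For each nonempty $V_i$ compute a minimum spanning tree $T_i$ of $V_i$ and a directed closed Euler tour $C_i$ of $T_i$ (a cyclic walk traversing each edge of $T_i$ twice), and mark an arbitrary point of $C_i$ as its ''last visited point''. The robot starts at $v_1$ and repeats forever: for $i=1,\dots,s$ with $V_i\ne\emptyset$: travel directly to the last visited point of $C_i$; then, if $|V_i|\ge2$, walk along $C_i$ in the tour direction from that point, stopping at the first tour vertex at which the distance covered along $C_i$ in this phase is at least $D$, and make that vertex the new last visited point of $C_i$. Bamboos are cut whenever the robot is at their point.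
   Context: Continuous BGT: bamboos at points $V=\{v_1,\dots,v_n\}$, growth rates $h_1\ge\dots\ge h_n>0$, initial heights $0$; symmetric travel times $t_{i,j}>0$ ($i\ne j$) satisfying the triangle inequality. The robot starts at $v_1$ at time $0$, moving from $v_i$ to $v_j$ takes time $t_{i,j}$, and the bamboo at a point is cut instantaneously to $0$ whenever the robot is there. Height of $b_i$ at time $t$ = $h_i$ times time since its last cut (or since $0$). $\mathrm{MH}$ = supremum of all heights over all times; $\mathrm{OPT}(I)$ = infimum of $\mathrm{MH}$ over all robot walks. $h_{\max}=h_1$, $h_{\min}=h_n$, $D=\max_{i,j}t_{i,j}$. *)

(* Defs.v *)
From HB Require Import structures.
From mathcomp Require Import all_boot all_order all_algebra.
From mathcomp Require Import all_classical all_reals.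
From mathcomp Require Import ereal exp.
From mathcomp Require Import Rstruct.

Set Implicit Arguments. Unset Strict Implicit. Unset Printing Implicit Defensive.
Import Order.TTheory GRing.Theory Num.Theory.
Local Open Scope ring_scope.

Lemma first_lt (n : nat) : (1 < n)%N -> (0 < n)%N.
Proof. by move=> h; apply: ltnW. Qed.
Lemma last_lt (n : nat) : (1 < n)%N -> (n.-1 < n)%N.
Proof. by move=> h; rewrite ltn_predL; apply: ltnW. Qed.

(* v_1 (index 0) and v_n (index n-1) *)
Definition first_pt (n : nat) (hn : (1 < n)%N) : 'I_n := Ordinal (first_lt hn).
Definition last_pt (n : nat) (hn : (1 < n)%N) : 'I_n := Ordinal (last_lt hn).

Section BGT.
Variable R : realType.
Variable n : nat.
Implicit Types (h : 'I_n -> R) (t : 'I_n -> 'I_n -> R).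

(* travel time; staying at the same point costs 0 (t_{i,i} is not part of the data) *)
Definition dist t (x y : 'I_n) : R := if x == y then 0 else t x y.

Definition Dmax t : R := \big[Num.max/0]_(i < n) \big[Num.max/0]_(j < n | j != i) t i j.

Definition valid_instance h t : Prop :=
  [/\ (forall i j : 'I_n, (i <= j)%N -> h j <= h i),
      (forall i, 0 < h i),
      (forall i j, i != j -> 0 < t i j),
      (forall i j, t i j = t j i) &
      (forall i j k, dist t i k <= dist t i j + dist t j k)].

(* A robot walk is an infinite sequence of points p 0, p 1, ... ; the robot
   arrives at p k at time arrival t p k. *)
Definition arrival t (p : nat -> 'I_n) (k : nat) : R :=
  \sum_(j < k) dist t (p j) (p j.+1).

(* time of the last cut of bamboo i up to time x (or 0 if none) *)
Definition last_cut t (p : nat -> 'I_n) (i : 'I_n) (x : R) : R :=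
  sup [set y : R | y = 0 \/ exists k, [/\ p k = i, arrival t p k = y & y <= x]]%classic.

Definition height h t (p : nat -> 'I_n) (i : 'I_n) (x : R) : R :=
  h i * (x - last_cut t p i x).

Definition MH h t (p : nat -> 'I_n) : \bar R :=
  ereal_sup [set z | exists i x, 0 <= x /\ z = (height h t p i x)%:E]%classic.

Definition OPT h t (v1 : 'I_n) : \bar R :=
  ereal_inf [set MH h t p | p in [set p : nat -> 'I_n | p 0%N = v1]]%classic.

(* an undirected edge {a,b} is stored as the pair (a,b) with a < b *)
Definition adj (E : {set 'I_n * 'I_n}) : rel 'I_n :=
  fun x y => ((x, y) \in E) || ((y, x) \in E).

Definition is_spanning_tree (S : {set 'I_n}) (E : {set 'I_n * 'I_n}) : Prop :=
  [/\ (forall e, e \in E -> [&& (e.1 < e.2)%N, e.1 \in S & e.2 \in S]),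
      #|E| = #|S|.-1 &
      {in S &, forall x y, connect (adj E) x y}].

Definition tree_weight t (E : {set 'I_n * 'I_n}) : R := \sum_(e in E) t e.1 e.2.

Definition is_MST t (S : {set 'I_n}) (E : {set 'I_n * 'I_n}) : Prop :=
  is_spanning_tree S E /\
  forall E', is_spanning_tree S E' -> tree_weight t E <= tree_weight t E'.

(* c = [c_0; ...; c_{m-1}] is a closed walk c_0 -> c_1 -> ... -> c_{m-1} -> c_0
   along the edges of E (a directed closed Euler tour of the doubled tree):
   each step uses an edge of E and every edge of E is traversed exactly twice *)
Definition euler_tour (E : {set 'I_n * 'I_n}) (c : seq 'I_n) : Prop :=
  let steps := zip c (rot 1 c) in
  [/\ (0 < size c)%N,
      all (fun q => adj E q.1 q.2) steps &
      forall e, e \in E -> count (fun q => (q == e) || ((q.2, q.1) == e)) steps = 2%N].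

Section Alg.
Variables (hn : (1 < n)%N) (h : 'I_n -> R) (t : 'I_n -> 'I_n -> R).

Definition hmax : R := h (first_pt hn).
Definition hmin : R := h (last_pt hn).
Definition log2 (x : R) : R := ln x / ln 2.

Definition nclasses : nat := (`|Num.floor (log2 (hmax / hmin))|%N).+1.

(* class k (k = 0..s-1) is V_{k+1} of the paper *)
Definition Vcls (k : nat) : {set 'I_n} :=
  [set j | (2 ^+ k * hmin <= h j) && (h j < 2 ^+ k.+1 * hmin)].

Definition ne_cls : seq nat := [seq k <- iota 0 nclasses | Vcls k != finset.set0].

(* choices made by the algorithm: tour k = C_k, m0 k = initially marked
   position (index into tour k) *)
Definition alg_choices (tour : nat -> seq 'I_n) (m0 : nat -> nat) : Prop :=
  forall k, (k < nclasses)%N -> Vcls k != finset.set0 ->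
    [/\ (#|Vcls k| = 1%N -> tour k = enum (Vcls k)),
        ((2 <= #|Vcls k|)%N -> exists E, is_MST t (Vcls k) E /\ euler_tour E (tour k)) &
        (m0 k < size (tour k))%N].

Record state := State {
  st_ph : nat;              (* index in ne_cls of the current phase *)
  st_mk : nat -> nat;       (* last visited point of each C_k (index into tour k) *)
  st_walking : bool;        (* false: must travel to last visited point of C_k *)
  st_acc : R;               (* distance covered along C_k in this phase *)
  st_cur : 'I_n }.

Definition step (tour : nat -> seq 'I_n) (st : state) : state :=
  let k := nth 0%N ne_cls (st_ph st) in
  let c := tour k in
  let nxt := ((st_ph st).+1 %% size ne_cls)%N in
  if ~~ st_walking st then
    let p' := nth (st_cur st) c (st_mk st k) in
    if (2 <= #|Vcls k|)%N then State (st_ph st) (st_mk st) true 0 p'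
    else State nxt (st_mk st) false 0 p'
  else
    let r := ((st_mk st k).+1 %% size c)%N in
    let p' := nth (st_cur st) c r in
    let a := st_acc st + dist t (st_cur st) p' in
    let mk' := fun j => if j == k then r else st_mk st j in
    if Dmax t <= a then State nxt mk' false 0 p'
    else State (st_ph st) mk' true a p'.

(* the walk produced by Algorithm 2: one point per elementary move *)
Definition alg_walk (tour : nat -> seq 'I_n) (m0 : nat -> nat) (k : nat) : 'I_n :=
  st_cur (iter k (step tour) (State 0 m0 false 0 (first_pt hn))).
End Alg.
End BGT.

(* Main.v *)
Require Import Defs.
From HB Require Import structures.
From mathcomp Require Import all_boot all_order all_algebra.
From mathcomp Require Import all_classical all_reals.
From mathcomp Require Import ereal exp.
From mathcomp Require Import Rstruct.
From mathcomp.algebra_tactics Require Import ring lra.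
From mathcomp Require Import zify.
Import Order.TTheory GRing.Theory Num.Theory.
Local Open Scope ring_scope.
Set Implicit Arguments. Unset Strict Implicit.

Section Walk.
Variable R : realType.
Variable n : nat.
Variables (h : 'I_n -> R) (t : 'I_n -> 'I_n -> R).
Hypothesis hv : valid_instance h t.
Implicit Types (i j l : 'I_n).

Lemma tpos i j : i != j -> 0 < t i j.
Proof. by case: hv => _ _ H _ _; apply: H. Qed.
Lemma tsym i j : t i j = t j i.
Proof. by case: hv => _ _ _ H _; apply: H. Qed.
Lemma dtri i j l : dist t i l <= dist t i j + dist t j l.
Proof. by case: hv => _ _ _ _ H; apply: H. Qed.
Lemma hpos i : 0 < h i.
Proof. by case: hv => _ H _ _ _; apply: H. Qed.
Lemma hmono i j : (i <= j)%N -> h j <= h i.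
Proof. by case: hv => H _ _ _ _; apply: H. Qed.

Lemma dist0 i : dist t i i = 0.
Proof. by rewrite /dist eqxx. Qed.
Lemma dist_neq i j : i != j -> dist t i j = t i j.
Proof. by rewrite /dist => /negbTE ->. Qed.
Lemma dist_ge0 i j : 0 <= dist t i j.
Proof. rewrite /dist; case: ifPn => // H; exact/ltW/tpos. Qed.
Lemma dist_gt0 i j : i != j -> 0 < dist t i j.
Proof. by move=> H; rewrite dist_neq //; apply: tpos. Qed.
Lemma dist_sym i j : dist t i j = dist t j i.
Proof. by rewrite /dist eq_sym tsym. Qed.
Lemma dist_eq0 i j : dist t i j = 0 -> i = j.
Proof. by case: (eqVneq i j) => // /dist_gt0 H E; move: H; rewrite E ltxx. Qed.

Lemma Dmax_ge0 : 0 <= Dmax t.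
Proof. by apply/bigmax_geP; left. Qed.

Lemma dist_leD i j : dist t i j <= Dmax t.
Proof.
rewrite /dist; case: ifPn => H; first exact: Dmax_ge0.
apply/bigmax_geP; right; exists i => //.
by apply/bigmax_geP; right; exists j => //; rewrite eq_sym.
Qed.

Lemma Dmax_le B : 0 <= B -> (forall i j, i != j -> t i j <= B) -> Dmax t <= B.
Proof.
move=> B0 H; apply: bigmax_le => // i _; apply: bigmax_le => // j ji.
by apply: H; rewrite eq_sym.
Qed.

Variable p : nat -> 'I_n.
Notation arr := (arrival t p).

Lemma arrS k : arr k.+1 = arr k + dist t (p k) (p k.+1).
Proof. by rewrite /arrival big_ord_recr. Qed.
Lemma arr0 : arr 0 = 0.
Proof. by rewrite /arrival big_ord0. Qed.
Lemma arr_mono k k' : (k <= k')%N -> arr k <= arr k'.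
Proof.
move/subnKC <-; elim: (k' - k)%N => [|d IH]; first by rewrite addn0.
by rewrite addnS arrS; apply: le_trans IH _; rewrite lerDl dist_ge0.
Qed.
Lemma arr_ge0 k : 0 <= arr k.
Proof. by rewrite -arr0; apply: arr_mono. Qed.
Lemma arr_tri k k' : (k <= k')%N -> dist t (p k) (p k') <= arr k' - arr k.
Proof.
move/subnKC <-; elim: (k' - k)%N => [|d IH]; first by rewrite addn0 dist0 subrr.
rewrite addnS arrS; apply: le_trans (dtri _ (p (k + d)%N) _) _; lra.
Qed.

Lemma lc_has_sup i x : 0 <= x ->
  has_sup [set y : R | y = 0 \/ exists k, [/\ p k = i, arr k = y & y <= x]]%classic.
Proof.
move=> x0; split; first by exists 0; left.
by exists x => y [->|[k [_ _ ->]]].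
Qed.

Lemma lc_ge0 i x : 0 <= x -> 0 <= last_cut t p i x.
Proof. by move=> x0; apply: (sup_upper_bound (lc_has_sup i x0)); left. Qed.

Lemma lc_ge i x k : 0 <= x -> p k = i -> arr k <= x -> arr k <= last_cut t p i x.
Proof.
by move=> x0 pk ak; apply: (sup_upper_bound (lc_has_sup i x0)); right; exists k.
Qed.

Lemma lc_le i x y : 0 <= y ->
  (forall k, p k = i -> arr k <= x -> arr k <= y) -> last_cut t p i x <= y.
Proof.
move=> y0 H; apply: ge_sup; first by exists 0; left.
by move=> z [->|[k [pk <- ak]]] //; apply: H.
Qed.
End Walk.
Section Tree.
Variable R : realType.
Variable n : nat.
Variables (h : 'I_n -> R) (t : 'I_n -> 'I_n -> R).
Hypothesis hv : valid_instance h t.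
Implicit Types (i j l : 'I_n).

Fixpoint plen (x : 'I_n) (s : seq 'I_n) : R :=
  if s is y :: s' then dist t x y + plen y s' else 0.

Lemma plen_ge0 x s : 0 <= plen x s.
Proof. elim: s x => [|y s IH] x /=; [exact: lexx|].
apply: addr_ge0; [exact: (dist_ge0 hv) | exact: IH]. Qed.

Lemma plen_head x z s : plen x s <= dist t x z + plen z s.
Proof.
case: s => [|y s] /=; first by rewrite addr0 (dist_ge0 hv).
have := dtri hv x z y; lra.
Qed.

Lemma plen_sub q x s : subseq s q -> plen x s <= plen x q.
Proof.
elim: q x s => [|z q IH] x s.
  by case: s => [|y s] //= _; exact: lexx.
case: s => [|y s] /=.
  by move=> _; apply: addr_ge0; [exact: (dist_ge0 hv)|exact: plen_ge0].
case: eqP => [->|ne] H.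
  by apply: lerD => //; apply: IH.
apply: le_trans (plen_head x z (y :: s)) _; apply: lerD => //.
by apply: IH.
Qed.

Lemma pathlen_sub y s z q : subseq (y :: s) (z :: q) -> plen y s <= plen z q.
Proof.
rewrite /=; case: eqP => [->|ne] H; first exact: plen_sub.
apply: le_trans (plen_sub z H); rewrite /=; have := dist_ge0 hv z y; lra.
Qed.

Lemma arr_plen (p : nat -> 'I_n) a K :
  arrival t p (a + K) - arrival t p a = plen (p a) (map p (iota a.+1 K)).
Proof.
elim: K a => [|K IH] a /=; first by rewrite addn0 subrr.
rewrite -IH addnS -addSn arrS; have := arrS t p a; lra.
Qed.

Definition normp (a b : 'I_n) : 'I_n * 'I_n := if (a < b)%N then (a, b) else (b, a).

Lemma normp_in a b (E : {set 'I_n * 'I_n}) : normp a b \in E -> adj E a b.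
Proof. by rewrite /adj /normp; case: ifP => _ ->; rewrite ?orbT. Qed.

Lemma normp_t a b : a != b -> t (normp a b).1 (normp a b).2 = dist t a b.
Proof. by move=> ab; rewrite dist_neq // /normp; case: ifP => //= _; rewrite (tsym hv). Qed.

Lemma normp_inj a b c d : normp a b = normp c d ->
  (a = c /\ b = d) \/ (a = d /\ b = c).
Proof.
rewrite /normp; case: ifP => _; case: ifP => _ [-> ->]; tauto.
Qed.

Lemma sum_plen x0 y s :
  \sum_(i < size s) dist t (nth x0 (y :: s) i) (nth x0 (y :: s) i.+1) = plen y s.
Proof.
elim: s y => [|z s IH] y /=; first by rewrite big_ord0.
by rewrite big_ord_recl /= IH.
Qed.

Lemma tree_of_seq (S : {set 'I_n}) y s :
  uniq (y :: s) -> S =i (y :: s) ->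
  exists E, is_spanning_tree S E /\ tree_weight t E = plen y s.
Proof.
move=> us eS; set c := y :: s.
pose f (i : 'I_(size s)) := normp (nth y c i) (nth y c i.+1).
have lt1 (i : 'I_(size s)) : (i < size c)%N by rewrite /= ltnS ltnW.
have lt2 (i : 'I_(size s)) : (i.+1 < size c)%N by rewrite /= ltnS.
have neq (i : 'I_(size s)) : nth y c i != nth y c i.+1.
  by rewrite (nth_uniq y (lt1 i) (lt2 i) us) neq_ltn ltnSn.
have finj : injective f.
  move=> i j /normp_inj [[e1 e2]|[e1 e2]].
    by apply/val_inj/eqP; rewrite -(nth_uniq y (lt1 i) (lt1 j) us) e1.
  move/eqP: e1; rewrite (nth_uniq y (lt1 i) (lt2 j) us) => /eqP e1.
  move/eqP: e2; rewrite (nth_uniq y (lt2 i) (lt1 j) us) => /eqP e2.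
  by move: e1 e2; clear; lia.
exists [set f i | i in 'I_(size s)]; split; last first.
  rewrite /tree_weight big_imset /=; last by move=> i j _ _; apply: finj.
  rewrite -(sum_plen y); apply: eq_bigr => i _; exact: normp_t.
split.
- move=> e /imsetP [i _ ->]; rewrite /f /normp.
  have inS k : (k < size c)%N -> nth y c k \in S by move=> Hk; rewrite eS mem_nth.
  have inS2 k : (k < size s)%N -> nth y s k \in S by move=> Hk; rewrite eS in_cons mem_nth ?orbT.
  have := neq i; case: (ltnP (nth y c i) (nth y c i.+1)) => H ne; move: H ne => /= H ne.
    by rewrite H inS2 // inS ?lt1.
  rewrite inS2 // inS ?lt1 // !andbT ltn_neqAle H andbT.
  by apply: contra ne => /eqP /val_inj ->.
- rewrite card_imset // card_ord (eq_card eS).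
  by move/card_uniqP: us ->.
- have base k : (k < size c)%N -> connect (adj [set f i | i in 'I_(size s)]) y (nth y c k).
    elim: k => [|k IH] Hk; first exact: connect0.
    apply: connect_trans (IH (ltnW Hk)) (connect1 _).
    have Hk' : (k < size s)%N by rewrite -ltnS.
    have -> : k = Ordinal Hk' by [].
    by apply: normp_in; apply/imsetP; exists (Ordinal Hk').
  have sym : connect_sym (adj [set f i | i in 'I_(size s)]).
    by apply: sym_connect_sym => a b; rewrite /adj orbC.
  move=> a b; rewrite !eS => /(nthP y) [ka Hka <-] /(nthP y) [kb Hkb <-].
  by apply: connect_trans (base _ Hkb); rewrite sym; apply: base.
Qed.
End Tree.
Section LB.
Variable R : realType.
Variable n : nat.
Variables (h : 'I_n -> R) (t : 'I_n -> 'I_n -> R).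
Hypothesis hv : valid_instance h t.
Variable p : nat -> 'I_n.
Variable M : R.
Hypothesis HM : forall i x, 0 <= x -> height h t p i x <= M.
Notation arr := (arrival t p).

Lemma M_ge0 (i : 'I_n) : 0 <= M.
Proof.
apply: le_trans (HM i (lexx 0)); rewrite /height.
have : last_cut t p i 0 <= 0.
  by apply: lc_le => // k _ H; exact: H.
have := hpos hv i; nra.
Qed.

Lemma visited i : exists k, p k == i.
Proof.
apply/not_existsP => Hn.
have M0 := M_ge0 i; have hi := hpos hv i.
set x := M / h i + 1.
have x0 : 0 <= x by rewrite /x; apply: addr_ge0 => //; apply: divr_ge0 => //; exact: ltW.
have := HM i x0; rewrite /height.
have : last_cut t p i x <= 0.
  by apply: lc_le => // k /eqP pk; have := Hn k; rewrite pk.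
have : h i * x = M + h i by rewrite /x mulrDr mulrCA divff ?mulr1 // gt_eqF.
nra.
Qed.

Definition kf i := ex_minn (visited i).

Lemma kfP i : p (kf i) = i.
Proof. by rewrite /kf; case: ex_minnP => k /eqP. Qed.
Lemma kf_min i k : p k = i -> (kf i <= k)%N.
Proof. by rewrite /kf; case: ex_minnP => k0 _ H /eqP /H. Qed.

Lemma kf_arr i : arr (kf i) <= M / h i.
Proof.
have M0 := M_ge0 i; have hi := hpos hv i.
rewrite leNgt; apply/negP => H.
set x := (M / h i + arr (kf i)) / 2.
have Mh : 0 <= M / h i by apply: divr_ge0 => //; exact: ltW.
have x0 : 0 <= x by rewrite /x; have := arr_ge0 hv p (kf i); lra.
have := HM i x0; rewrite /height.
have : last_cut t p i x <= 0.
  apply: lc_le => // k pk ak.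
  have := arr_mono hv p (kf_min pk); rewrite /x in ak; lra.
have : M / h i < x by rewrite /x; lra.
have : h i * (M / h i) = M by rewrite mulrCA divff ?mulr1 // gt_eqF.
move=> E1 E2 E3 E4.
have : h i * (M / h i) < h i * x by rewrite ltr_pM2l.
nra.
Qed.

Lemma far k : h (p 0) * dist t (p 0) (p k) <= M.
Proof.
set x := arr k.
have x0 : 0 <= x := arr_ge0 hv p k.
have dle : dist t (p 0) (p k) <= x by have := arr_tri hv p (leq0n k); rewrite arr0 subr0.
have := HM (p 0) x0; rewrite /height.
have : last_cut t p (p 0) x <= x - dist t (p 0) (p k).
  apply: lc_le => [|k' pk' ak']; first lra.
  case: (leqP k' k) => kk.
    have := arr_tri hv p kk; rewrite pk'; rewrite /x; lra.
  have := arr_tri hv p (ltnW kk); rewrite pk' (dist_sym hv).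
  rewrite /x in ak' *; have := dist_ge0 hv (p 0) (p k); lra.
have := hpos hv (p 0); nra.
Qed.

Lemma DmaxM : h (p 0) * Dmax t <= 2 * M.
Proof.
have hp := hpos hv (p 0); have M0 := M_ge0 (p 0).
rewrite -ler_pdivlMl //; apply: Dmax_le.
  by apply: mulr_ge0; [rewrite invr_ge0; exact: ltW| lra].
move=> a b ab; rewrite -(dist_neq t ab) ler_pdivlMl //.
have Ha := far (kf a); have Hb := far (kf b); rewrite kfP in Ha; rewrite kfP in Hb.
have T := dtri hv a (p 0) b; rewrite (dist_sym hv a (p 0)) in T.
have : h (p 0) * dist t a b <= h (p 0) * (dist t (p 0) a + dist t (p 0) b).
  by rewrite ler_pM2l.
lra.
Qed.

Lemma walk_tree (S : {set 'I_n}) (rho : R) : 0 < rho -> S != finset.set0 ->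
  (forall i, i \in S -> rho <= h i) ->
  exists E, is_spanning_tree S E /\ tree_weight t E <= M / rho.
Proof.
move=> r0 Sne Hr.
have cS : (0 < #|S|)%N by rewrite card_gt0.
case: (eq_bigmax_cond kf cS) => i0 i0S Kdef.
set K := (\max_(i in S) kf i)%N in Kdef.
set q := map p (iota 0 K.+1).
set s := undup [seq x <- q | x \in S].
have sS : S =i s.
  move=> x; rewrite mem_undup mem_filter; apply/idP/idP => [xS|/andP [] //].
  rewrite xS /= /q; apply/mapP; exists (kf x); last by rewrite kfP.
  by rewrite mem_iota /= add0n ltnS /K; apply: leq_bigmax_cond.
have us : uniq s by apply: undup_uniq.
case Es : s => [|y s'].
  by move: Sne; case: (set_0Vmem S) => [->|[x xS]]; [rewrite eqxx | rewrite sS Es in xS].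
rewrite Es in us sS.
case: (tree_of_seq hv us sS) => E [ET Ew]; exists E; split => //; rewrite Ew.
have sub : subseq (y :: s') (p 0 :: map p (iota 1 K)).
  rewrite -Es /s; apply: subseq_trans (undup_subseq _) _; exact: filter_subseq.
apply: le_trans (pathlen_sub hv sub) _.
have := arr_plen t p 0 K; rewrite add0n arr0 subr0 => <-.
rewrite Kdef; apply: le_trans (kf_arr i0) _.
have M0 := M_ge0 i0.
apply: ler_wpM2l => //; rewrite lef_pV2 ?posrE ?hpos //.
  by apply: Hr.
exact: hpos hv i0.
Qed.
End LB.
Section Tour.
Variable R : realType.
Variable n : nat.
Variables (h : 'I_n -> R) (t : 'I_n -> 'I_n -> R).
Hypothesis hv : valid_instance h t.
Variable x0 : 'I_n.
Variable c : seq 'I_n.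

Definition dl (i : nat) : R := dist t (nth x0 c (i %% size c)) (nth x0 c (i.+1 %% size c)).
Definition Lam : R := \sum_(i < size c) dl i.

Lemma dl_ge0 i : 0 <= dl i.
Proof. rewrite /dl; exact: (dist_ge0 hv). Qed.

Lemma dl_per i : dl (i + size c) = dl i.
Proof. by rewrite /dl -addSn !modnDr. Qed.

Lemma Lam_shift r : \sum_(i < size c) dl (r + i) = Lam.
Proof.
elim: r => [|r IH]; first by apply: eq_bigr => i _; rewrite add0n.
rewrite -IH; case Ec: (size c) => [|m]; first by rewrite !big_ord0.
rewrite [LHS]big_ord_recr [RHS]big_ord_recl /= addn0.
have -> : (r.+1 + m = r + size c)%N by rewrite Ec addnS addSn.
rewrite dl_per addrC; congr (_ + _); apply: eq_bigr => i _.
by rewrite /bump /= add1n addnS addSn.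
Qed.

Lemma nth_rot1 i : (i < size c)%N -> nth x0 (rot 1 c) i = nth x0 c (i.+1 %% size c).
Proof.
case: c => [|y c'] //= Hi.
rewrite rot1_cons nth_rcons.
case: (ltnP i (size c')) => H.
  by rewrite modn_small ?ltnS.
have -> : i = size c' by apply/eqP; rewrite eqn_leq H -ltnS Hi.
by rewrite modnn eqxx.
Qed.

Lemma Lam_zip : Lam = \sum_(q <- zip c (rot 1 c)) dist t q.1 q.2.
Proof.
rewrite (big_nth (x0, x0)) size_zip size_rot minnn big_mkord.
apply: eq_bigr => i _; rewrite nth_zip ?size_rot //= nth_rot1 //.
by rewrite /dl modn_small.
Qed.

Lemma Lam_tree (E : {set 'I_n * 'I_n}) :
  (forall e, e \in E -> (e.1 < e.2)%N) -> euler_tour E c ->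
  Lam <= 2 * tree_weight t E.
Proof.
move=> HE [_ Hadj Hcnt].
set st := zip c (rot 1 c).
pose mt (q e : 'I_n * 'I_n) := (q == e) || ((q.2, q.1) == e).
pose w q e := if mt q e then t e.1 e.2 else 0.
have wge0 q e : e \in E -> 0 <= w q e.
  move=> eE; rewrite /w; case: ifP => // _; apply/ltW/(tpos hv).
  by rewrite neq_ltn HE.
have step q : q \in st -> dist t q.1 q.2 <= \sum_(e in E) w q e.
  move=> qin; have := allP Hadj q qin; rewrite /adj => Hq.
  have [e0 [e0E me0 te0]] : exists e0, [/\ e0 \in E, mt q e0 & t e0.1 e0.2 = dist t q.1 q.2].
    case/orP: Hq => Hq.
      exists (q.1, q.2); split => //.
        by rewrite /mt -surjective_pairing eqxx.
      have ne : q.1 != q.2 by rewrite neq_ltn (HE _ Hq).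
      by rewrite (dist_neq t ne).
    exists (q.2, q.1); split => //.
      by rewrite /mt eqxx orbT.
    have ne : q.1 != q.2 by rewrite neq_ltn (HE _ Hq) orbT.
    by rewrite (dist_neq t ne) (tsym hv).
  rewrite (bigD1 e0) //= /w me0 te0 lerDl; apply: sumr_ge0 => e /andP [eE _].
  exact: wge0.
rewrite Lam_zip; apply: le_trans (_ : \sum_(q <- st) \sum_(e in E) w q e <= _).
  by rewrite big_seq_cond [X in _ <= X]big_seq_cond; apply: ler_sum => q /andP [qin _]; apply: step.
rewrite exchange_big /tree_weight mulr_sumr; apply: ler_sum => e eE.
rewrite /w -big_mkcond /= big_const_seq /=.
have := Hcnt e eE; rewrite -/st => ->.
by rewrite /= addr0 mulr2n mulrDl mul1r.
Qed.

Lemma Lam_part r K : (K <= size c)%N -> \sum_(0 <= i < K) dl (r + i) <= Lam.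
Proof.
move=> Hk; rewrite -(Lam_shift r) -(big_mkord xpredT (fun i => dl (r + i))).
rewrite (@big_cat_nat _ _ _ K 0 (size c)) //= lerDl.
by apply: sumr_ge0 => i _; apply: dl_ge0.
Qed.
End Tour.
Section Classes.
Variable R : realType.
Variable n : nat.
Variable hn : (1 < n)%N.
Variables (h : 'I_n -> R) (t : 'I_n -> 'I_n -> R).
Hypothesis hv : valid_instance h t.
Hypothesis hlt : hmin hn h < hmax hn h.

Lemma hmin_pos : 0 < hmin hn h. Proof. rewrite /hmin; exact: (hpos hv). Qed.
Lemma hmin_le j : hmin hn h <= h j.
Proof. by rewrite /hmin; apply: (hmono hv); rewrite /last_pt /= -ltnS prednK ?ltn_ord // ltnW. Qed.
Lemma hmax_ge j : h j <= hmax hn h.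
Proof. rewrite /hmax; exact: (hmono hv). Qed.

Lemma ln2_gt0 : 0 < ln (2 : R).
Proof. by apply: ln_gt0; rewrite ltr1n. Qed.

Lemma pow2_pos k : 0 < (2 : R) ^+ k.
Proof. by apply: exprn_gt0. Qed.

Lemma ln_pow2 k : ln ((2 : R) ^+ k) = k%:R * ln 2.
Proof. by rewrite lnXn // mulr_natl. Qed.

Lemma log2_ge0 (x : R) : 1 <= x -> 0 <= log2 x.
Proof.
move=> x1; rewrite /log2 divr_ge0 //; last exact/ltW/ln2_gt0.
case: (ltrgt0P (x - 1)) => H; last by rewrite (_ : x = 1) ?ln1 //; lra.
  by apply/ltW/ln_gt0; lra.
lra.
Qed.

Lemma log2_le (x y : R) : 0 < x -> x <= y -> log2 x <= log2 y.
Proof.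
move=> x0 xy; rewrite /log2 ler_pM2r ?invr_gt0 ?ln2_gt0 //.
by rewrite ler_ln // posrE //; apply: lt_le_trans xy.
Qed.

Lemma absz_le (a b : int) : (0 <= a)%R -> (a <= b)%R -> (`|a| <= `|b|)%N.
Proof. move=> a0 ab; lia. Qed.

Lemma class_exists j : exists k, (k < nclasses hn h)%N /\ j \in Vcls hn h k.
Proof.
have hm := hmin_pos; set x := h j / hmin hn h.
have x1 : 1 <= x by rewrite /x ler_pdivlMr // mul1r hmin_le.
have lx0 := log2_ge0 x1.
set k := `|Num.floor (log2 x)|%N.
have fl0 : (0 <= Num.floor (log2 x))%R by rewrite floor_ge0.
have kE : (k%:R : R) = (Num.floor (log2 x))%:~R by rewrite /k -[in RHS](gez0_abs fl0).
have [f1 f2] : k%:R <= log2 x /\ log2 x < k%:R + 1.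
  by rewrite kE; have /andP [] := floor_itv (log2 x); rewrite intrD.
have l2 := ln2_gt0.
have x0 : 0 < x by lra.
exists k; split.
  rewrite /nclasses ltnS /k; apply: absz_le => //; apply: le_floor.
  apply: log2_le => //; rewrite /x ler_pM2r ?invr_gt0 //; exact: hmax_ge.
rewrite inE; apply/andP; split.
  rewrite -ler_pdivlMr //.
  rewrite -ler_ln ?posrE ?pow2_pos // ln_pow2.
  by move: f1; rewrite /log2 ler_pdivlMr.
rewrite -ltr_pdivrMr //.
have : ln x < ln ((2 : R) ^+ k.+1).
  rewrite ln_pow2 -ltr_pdivrMr // -[k.+1]addn1 natrD.
  by rewrite /log2 in f2.
by rewrite ltNge ler_ln ?posrE ?pow2_pos // -ltNge.
Qed.

Lemma mem_ne k : (k \in ne_cls hn h) = (k < nclasses hn h)%N && (Vcls hn h k != finset.set0).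
Proof. by rewrite /ne_cls mem_filter mem_iota add0n andbC. Qed.

Lemma uniq_ne : uniq (ne_cls hn h).
Proof. by rewrite /ne_cls filter_uniq // iota_uniq. Qed.

Lemma class_ne j : exists2 q, (q < size (ne_cls hn h))%N & j \in Vcls hn h (nth 0%N (ne_cls hn h) q).
Proof.
case: (class_exists j) => k [kn jk].
have kin : k \in ne_cls hn h by rewrite mem_ne kn /=; apply/set0Pn; exists j.
by exists (index k (ne_cls hn h)); rewrite ?index_mem ?nth_index.
Qed.

Lemma L_gt0 : (0 < size (ne_cls hn h))%N.
Proof. by case: (class_ne (last_pt hn)) => q qL _; exact: (leq_ltn_trans (leq0n q) qL). Qed.

Lemma L_le : (size (ne_cls hn h))%:R <= 2 * log2 ((Num.ceil (hmax hn h / hmin hn h))%:~R : R).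
Proof.
have hm := hmin_pos; set r := hmax hn h / hmin hn h.
have r1 : 1 < r by rewrite /r ltr_pdivlMr // mul1r.
have l2 := ln2_gt0.
have c1 : (2 : R) <= (Num.ceil r)%:~R.
  have : (1 < Num.ceil r)%R by rewrite (ceil_gt_int r 1).
  by move=> H; rewrite (_ : 2 = (2%:Z)%:~R) // ler_int.
have cr : r <= (Num.ceil r)%:~R := ceil_ge r.
have lc1 : 1 <= log2 ((Num.ceil r)%:~R : R).
  rewrite /log2 ler_pdivlMr // mul1r ler_ln ?posrE //; lra.
have lr : log2 r <= log2 ((Num.ceil r)%:~R : R) by apply: log2_le => //; lra.
have lr0 : 0 <= log2 r by apply: log2_ge0; lra.
have fl0 : (0 <= Num.floor (log2 r))%R by rewrite floor_ge0.
have nc : (nclasses hn h)%:R <= log2 r + 1.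
  rewrite /nclasses -/r -addn1 natrD lerD2r.
  rewrite -[X in X%:R]/(`|Num.floor (log2 r)|%N).
  have -> : ((`|Num.floor (log2 r)|%N)%:R : R) = (Num.floor (log2 r))%:~R.
    by rewrite -[in RHS](gez0_abs fl0).
  exact: floor_le.
have sz : (size (ne_cls hn h) <= nclasses hn h)%N.
  by rewrite /ne_cls size_filter -[X in (_ <= X)%N](size_iota 0) count_size.
have : (size (ne_cls hn h))%:R <= (nclasses hn h)%:R :> R by rewrite ler_nat.
lra.
Qed.
End Classes.
Section Gap.
Variable R : realType.
Variable n : nat.
Variables (h : 'I_n -> R) (t : 'I_n -> 'I_n -> R).
Hypothesis hv : valid_instance h t.
Variable p : nat -> 'I_n.
Notation arr := (arrival t p).

Lemma unbounded (a b : 'I_n) : a != b ->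
  (forall k, exists k', (k < k')%N /\ p k' = a) ->
  (forall k, exists k', (k < k')%N /\ p k' = b) ->
  forall x, exists k, x < arr k.
Proof.
move=> ab Ha Hb.
have dl0 := dist_gt0 hv ab.
have step k : exists k', arr k + dist t a b <= arr k'.
  case: (Ha k) => k1 [kk1 pk1]; case: (Hb k1) => k2 [k12 pk2].
  exists k2; have := arr_tri hv p (ltnW k12); rewrite pk1 pk2.
  have := arr_mono hv p (ltnW kk1); lra.
have big N : exists k, N%:R * dist t a b <= arr k.
  elim: N => [|N [k Hk]]; first by exists 0%N; rewrite mul0r (arr_ge0 hv).
  case: (step k) => k' Hk'; exists k'; rewrite -natr1 mulrDl mul1r; lra.
move=> x; case: (big (Num.trunc (x / dist t a b)).+1) => k Hk; exists k.
apply: lt_le_trans Hk; rewrite -ltr_pdivrMr //.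
by apply: le_lt_trans (truncnS_gt _); rewrite lexx.
Qed.

Lemma gap_height (i : 'I_n) (G : R) : 0 <= G ->
  (forall k, exists k', [/\ (k < k')%N, p k' = i & arr k' - arr k <= G]) ->
  (forall x, exists k, x < arr k) ->
  forall x, 0 <= x -> height h t p i x <= h i * G.
Proof.
move=> G0 Hgap Hunb x x0; rewrite /height.
have hi := hpos hv i.
case: (lerP x G) => xG.
  have := lc_ge0 t p i x0; rewrite ler_pM2l //; lra.
set y := x - G.
have exP : exists k, (arr k <= y) by exists 0%N; rewrite arr0 /y; lra.
case: (Hunb y) => B HB.
have ubP : forall k, (arr k <= y) -> (k <= B)%N.
  move=> k Hk; rewrite leqNgt; apply/negP => kB.
  have := arr_mono hv p (ltnW kB); lra.
case: (ex_maxnP exP ubP) => km Pkm Hmax.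
case: (Hgap km) => k' [kk' pk' ak'].
have nP : y < arr k'.
  rewrite ltNge; apply/negP => /Hmax; rewrite leqNgt kk'.
  done.
have Hlc : arr k' <= last_cut t p i x by apply: lc_ge => //; rewrite /y in nP Pkm; lra.
rewrite ler_pM2l //; rewrite /y in nP; lra.
Qed.
End Gap.
Section TourFacts.
Variable R : realType.
Variable n : nat.
Variable hn : (1 < n)%N.
Variables (h : 'I_n -> R) (t : 'I_n -> 'I_n -> R).
Hypothesis hv : valid_instance h t.
Variables (tour : nat -> seq 'I_n) (m0 : nat -> nat).
Hypothesis Hch : alg_choices hn h t tour m0.
Hypothesis hlt : hmin hn h < hmax hn h.
Notation ne := (ne_cls hn h).
Notation x0 := (first_pt hn).

Section K.
Variable k : nat.
Hypothesis kne : k \in ne.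
Notation V := (Vcls hn h k).
Notation c := (tour k).

Lemma ch_k : [/\ (#|V| = 1%N -> c = enum V),
        ((2 <= #|V|)%N -> exists E, is_MST t V E /\ euler_tour E c) &
        (m0 k < size c)%N].
Proof. by move: kne; rewrite mem_ne => /andP [H1 H2]; apply: Hch. Qed.

Lemma V_ne : (0 < #|V|)%N.
Proof. by move: kne; rewrite mem_ne => /andP [_]; rewrite card_gt0. Qed.

Lemma tour_sz : (0 < size c)%N.
Proof. by case: ch_k => _ _ H; apply: leq_ltn_trans H. Qed.

Lemma tour_single j : (#|V| < 2)%N -> j \in V -> c = [:: j].
Proof.
move=> H jV; have c1 : #|V| = 1%N by have := V_ne; case: #|V| H => [|[|]].
case: ch_k => /(_ c1) -> _ _.
by case/cards1P: (introT eqP c1) => x Vx; move: jV; rewrite Vx inE => /eqP ->; rewrite enum_set1.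
Qed.

Lemma adj_neq (E : {set 'I_n * 'I_n}) a b : is_spanning_tree V E -> adj E a b -> a != b.
Proof.
case=> HE _ _; rewrite /adj => /orP [] /HE /andP [H _].
  by rewrite neq_ltn H.
by rewrite neq_ltn H orbT.
Qed.

Lemma tour_next i : (2 <= #|V|)%N -> (i < size c)%N ->
  nth x0 c i != nth x0 c (i.+1 %% size c).
Proof.
move=> H2 Hi; case: ch_k => _ /(_ H2) [E [[ET _] [_ Hadj _]]] _.
have Hsz : (i < size (zip c (rot 1 c)))%N by rewrite size_zip size_rot minnn.
have := all_nthP (x0, x0) Hadj i Hsz; rewrite nth_zip ?size_rot //= nth_rot1 //.
exact: adj_neq ET.
Qed.

Lemma tour_mem j : j \in V -> j \in c.
Proof.
move=> jV; case: (ltnP #|V| 2) => H2.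
  by rewrite (tour_single H2 jV) mem_head.
case: ch_k => _ /(_ H2) [E [[ET _] [_ Hadj Hcnt]]] _.
case: ET => HE Hcard Hconn.
have [j' j'V jj'] : exists2 j', j' \in V & j' != j.
  have : (0 < #|V :\ j|)%N by move: H2; rewrite (cardsD1 j) jV add1n ltnS.
  by rewrite card_gt0 => /set0Pn [j' /setD1P [H1 H3]]; exists j'.
have := Hconn j j' jV j'V; case/connectP => pth.
case: pth => [_ /= E1|y pth /= /andP [jy _] _]; first by rewrite E1 eqxx in jj'.
have [e [eE me]] : exists e, e \in E /\ ((e == (j, y)) || (e == (y, j))).
  by case/orP: jy => H; [exists (j, y) | exists (y, j)]; rewrite H eqxx ?orbT.
have := Hcnt e eE; set P := (fun q => _) => cP.
have : has P (zip c (rot 1 c)) by rewrite has_count cP.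
case/hasP => q qin; rewrite /P.
case/(nthP (x0, x0)): qin => i; rewrite size_zip size_rot minnn => Hi.
rewrite nth_zip ?size_rot // => <- /=.
have m1 : nth x0 c i \in c by rewrite mem_nth.
have m2 : nth x0 (rot 1 c) i \in c by rewrite -(mem_rot 1) mem_nth ?size_rot.
by case/orP: me => /eqP -> /orP [] /eqP [E1 E2]; rewrite -?E1 -?E2.
Qed.

Lemma tw_ge0 (E : {set 'I_n * 'I_n}) : is_spanning_tree V E -> 0 <= tree_weight t E.
Proof.
case=> HE _ _; apply: sumr_ge0 => e /HE /andP [H _]; apply/ltW/(tpos hv).
by rewrite neq_ltn H.
Qed.

Lemma Lam_bound (E' : {set 'I_n * 'I_n}) : is_spanning_tree V E' ->
  Lam t x0 c <= 2 * tree_weight t E'.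
Proof.
move=> ET'; case: (ltnP #|V| 2) => H2.
  have := V_ne; rewrite card_gt0 => /set0Pn [j jV].
  rewrite /Lam (tour_single H2 jV) /= big_ord1 /dl /= dist0.
  by apply: mulr_ge0 => //; apply: tw_ge0.
case: ch_k => _ /(_ H2) [E [[ET Hmin] Heu]] _.
apply: le_trans (Lam_tree hv x0 _ Heu) _.
  by case: ET => HE _ _ e /HE /andP [].
by rewrite ler_pM2l // Hmin.
Qed.
End K.

Notation L := (size ne).
Notation D := (Dmax t).
Notation stp := (step hn h t tour).

Definition init : state R n := State 0 m0 false 0 (first_pt hn).
Definition sig m := iter m stp init.

Definition Inv (st : state R n) : Prop := [/\ (st_ph st < L)%N,
   (forall q, (q < L)%N -> (st_mk st (nth 0%N ne q) < size (tour (nth 0%N ne q)))%N) &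
   (st_walking st -> [/\ (2 <= #|Vcls hn h (nth 0%N ne (st_ph st))|)%N,
        st_cur st = nth x0 (tour (nth 0%N ne (st_ph st))) (st_mk st (nth 0%N ne (st_ph st))),
        0 <= st_acc st & st_acc st < D])].

Lemma ne_in q : (q < L)%N -> nth 0%N ne q \in ne.
Proof. by move=> H; rewrite mem_nth. Qed.

Lemma Inv_init : Inv init.
Proof.
split => //=; first exact: L_gt0 hv hlt.
by move=> q /ne_in H; case: (ch_k H).
Qed.

Lemma nxt_lt ph : (ph.+1 %% L < L)%N.
Proof. by rewrite ltn_pmod // (L_gt0 hv hlt). Qed.

Lemma fl_neq : first_pt hn != last_pt hn.
Proof.
apply/eqP => /(congr1 val) /= E.
by move: hn; rewrite -(prednK (ltnW hn)) -E.
Qed.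

Lemma D_pos : 0 < D.
Proof. exact: lt_le_trans (dist_gt0 hv fl_neq) (dist_leD _ _ _). Qed.

Lemma Inv_step st : Inv st -> Inv (stp st).
Proof.
case: st => ph mk w acc cur [/= Hph Hmk Hw]; rewrite /step /=.
set k := nth 0%N ne ph.
have kin : k \in ne by apply: ne_in.
have sz := tour_sz kin.
case: w Hw => Hw /=.
  have [H2 Hcur a0 aD] := Hw erefl.
  set r := ((mk k).+1 %% size (tour k))%N.
  have rlt : (r < size (tour k))%N by rewrite ltn_pmod.
  have Hmk' q : (q < L)%N -> ((if nth 0%N ne q == k then r else mk (nth 0%N ne q)) < size (tour (nth 0%N ne q)))%N.
    by move=> qL; case: eqP => [->|_]; [exact: rlt | exact: Hmk].
  case: ifP => HD; split => //=; first exact: nxt_lt.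
  move=> _; rewrite eqxx; split => //.
    by rewrite (set_nth_default x0) // .
  by apply: addr_ge0 => //; exact: (dist_ge0 hv).
  by rewrite ltNge HD.
case: ifP => H2; split => //=; last exact: nxt_lt.
move=> _; split => //; last exact: D_pos.
by rewrite (set_nth_default x0) // Hmk.
Qed.

Lemma Inv_sig m : Inv (sig m).
Proof. elim: m => [|m IH]; first exact: Inv_init. by rewrite /sig iterS; apply: Inv_step. Qed.

Definition pr0 := (first_pt hn, last_pt hn).
Definition qmin := [arg min_(q < pr0 | q.1 != q.2) dist t q.1 q.2]%O.
Definition eta := Num.min D (dist t qmin.1 qmin.2).

Lemma qminP : qmin.1 != qmin.2 /\ forall a b : 'I_n, a != b -> dist t qmin.1 qmin.2 <= dist t a b.
Proof.
rewrite /qmin; case: arg_minP => [|q Pq Hm]; first exact: fl_neq.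
by split => // a b ab; apply: (Hm (a, b)).
Qed.

Lemma eta_pos : 0 < eta.
Proof.
case: qminP => H _; rewrite /eta lt_min D_pos /=; exact: (dist_gt0 hv H).
Qed.
Lemma eta_leD : eta <= D. Proof. by rewrite /eta ge_min lexx. Qed.
Lemma eta_le a b : a != b -> eta <= dist t a b.
Proof. by move=> ab; case: qminP => _ H; rewrite /eta ge_min H ?orbT. Qed.

Lemma modSE M r : (r < M)%N -> (r.+1 %% M = if r.+1 == M then 0 else r.+1)%N.
Proof.
move=> H; case: eqP => [->|ne1]; first by rewrite modnn.
by rewrite modn_small // ltn_neqAle H andbT; apply/eqP.
Qed.

Section Target.
Variables (j : 'I_n) (qj pos : nat).
Hypothesis qjL : (qj < L)%N.
Notation kj := (nth 0%N ne qj).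
Notation c := (tour kj).
Notation m := (size c).
Hypothesis jV : j \in Vcls hn h kj.
Hypothesis posL : (pos < m)%N.
Hypothesis posj : nth x0 c pos = j.

Lemma kjin : kj \in ne. Proof. exact: ne_in. Qed.
Lemma m_gt0 : (0 < m)%N. Proof. exact: tour_sz kjin. Qed.

Definition Kd r := if (r <= pos)%N then (pos - r)%N else (pos + m - r)%N.
Definition ell r : R := \sum_(0 <= i < Kd r) dl t x0 c (r + i).
Notation Lamj := (Lam t x0 c).

Lemma ell_ge0 r : 0 <= ell r.
Proof. by apply: sumr_ge0 => i _; exact: (dl_ge0 hv). Qed.

Lemma ell_le r : (r < m)%N -> ell r <= Lamj.
Proof.
move=> rm; apply: (Lam_part hv).
by rewrite /Kd; case: ifP => H; lia.
Qed.

Lemma ell_step r : (r < m)%N -> r != pos ->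
  ell r = dist t (nth x0 c r) (nth x0 c (r.+1 %% m)) + ell (r.+1 %% m).
Proof.
move=> rm rp.
have K1 : (0 < Kd r)%N by rewrite /Kd; case: ifP => H; lia.
rewrite /ell big_ltn // addn0 /dl (modn_small rm); congr (_ + _).
rewrite big_add1 modSE //.
have HK : (Kd r).-1 = Kd (if r.+1 == m then 0 else r.+1)%N.
  rewrite /Kd; case: eqP => E; rewrite ?leq0n ?subn0 /=; case: (leqP r pos) => H1;
    try case: (leqP r.+1 pos) => H2; lia.
rewrite HK; apply: eq_bigr => i _; case: eqP => E.
  have -> : (r + i.+1 = i + m)%N by lia.
  by rewrite add0n -addSn !modnDr.
by rewrite addSn addnS.
Qed.

Definition dlt ph := if (ph <= qj)%N then (qj - ph)%N else (qj + L - ph)%N.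

Definition Phi (st : state R n) : R :=
  let e := ell (st_mk st kj) in
  if st_walking st then
    (if st_ph st == qj then 2 * D - st_acc st + 3 * (L%:R) * (e + st_acc st)
     else 2 * D - st_acc st + 3 * D * (dlt (st_ph st))%:R + 3 * L%:R * e)
  else 3 * D + 3 * D * (dlt (st_ph st))%:R + 3 * L%:R * e.

Lemma dlt_qj : dlt qj = 0%N.
Proof. by rewrite /dlt leqnn subnn. Qed.
Lemma dlt_le ph : (ph < L)%N -> (dlt ph <= L.-1)%N.
Proof. by move=> H; rewrite /dlt; case: ifP => H1; lia. Qed.
Lemma dlt_nxt ph : (ph < L)%N -> ph != qj -> (dlt (ph.+1 %% L)).+1 = dlt ph.
Proof.
move=> H pq; rewrite modSE // /dlt; case: eqP => E; rewrite ?leq0n ?subn0 /=;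
  case: (leqP ph qj) => H1; try case: (leqP ph.+1 qj) => H2; lia.
Qed.
Lemma dlt_nxt_qj : dlt (qj.+1 %% L) = L.-1.
Proof.
rewrite modSE // /dlt; case: eqP => E; rewrite ?leq0n ?subn0 /=; try lia.
rewrite ltnn; have := L_gt0 hv hlt; lia.
Qed.

Lemma L_ge1 : 1 <= (L%:R : R).
Proof. by rewrite ler1n (L_gt0 hv hlt). Qed.

Lemma dltR ph : (ph < L)%N -> ((dlt ph)%:R : R) <= L%:R - 1.
Proof.
move=> H; have := dlt_le H; rewrite -(ler_nat R) => H2; apply: le_trans H2 _.
have L0 := L_gt0 hv hlt.
by rewrite -[in X in _ <= X](prednK L0) -natr1 addrK.
Qed.

Lemma Phi_ge st : Inv st -> D <= Phi st.
Proof.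
case: st => ph mk w acc cur [/= Hph Hmk Hw]; rewrite /Phi /=.
have e0 := ell_ge0 (mk kj); have L1 := L_ge1; have D0 := D_pos.
have P1 : 0 <= L%:R * ell (mk kj) by apply: mulr_ge0 => //; lra.
have P2 : 0 <= D * (dlt ph)%:R by apply: mulr_ge0 => //; lra.
case: w Hw => Hw.
  have [_ _ a0 aD] := Hw erefl.
  have P3 : 0 <= L%:R * acc by apply: mulr_ge0 => //; lra.
  case: eqP => _; lra.
lra.
Qed.

Lemma Phi_le st : Inv st -> Phi st <= 5 * L%:R * D + 3 * L%:R * Lamj.
Proof.
case: st => ph mk w acc cur [/= Hph Hmk Hw]; rewrite /Phi /=.
have e0 := ell_ge0 (mk kj); have L1 := L_ge1; have D0 := D_pos.
have eL : ell (mk kj) <= Lamj by apply: ell_le; apply: Hmk.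
have P1 : L%:R * ell (mk kj) <= L%:R * Lamj by apply: ler_wpM2l => //; lra.
have P2 : D * (dlt ph)%:R <= D * (L%:R - 1) by apply: ler_wpM2l; [lra | exact: dltR].
have P4 : D <= L%:R * D by rewrite ler_peMl //; lra.
case: w Hw => Hw.
  have [_ _ a0 aD] := Hw erefl.
  have P3 : L%:R * acc <= L%:R * D by apply: ler_wpM2l; lra.
  case: eqP => _; lra.
lra.
Qed.

Lemma Phi_dec st : Inv st -> st_cur st != j -> st_cur (stp st) != j ->
  Phi (stp st) + dist t (st_cur st) (st_cur (stp st)) <= Phi st /\
  Phi (stp st) + eta <= Phi st.
Proof.
case: st => ph mk w acc cur [/= Hph Hmk Hw] Hc; rewrite /step /=.
set k := nth 0%N ne ph.
have kin : k \in ne by apply: ne_in.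
have L1 := L_ge1; have D0 := D_pos; have et0 := eta_pos; have etD := eta_leD.
have e0 := ell_ge0 (mk kj).
have mkk : (mk k < size (tour k))%N by apply: Hmk.
have Ekk : (kj == k) = (qj == ph) by rewrite nth_uniq // uniq_ne.
have Pe : 0 <= L%:R * ell (mk kj) by apply: mulr_ge0 => //; lra.
case: w Hw => Hw /=.
  have [H2 Hcur a0 aD] := Hw erefl.
  have szk := tour_sz kin.
  set r := ((mk k).+1 %% size (tour k))%N.
  have rlt : (r < size (tour k))%N by rewrite ltn_pmod.
  set p' := nth cur (tour k) r.
  have p'E : p' = nth x0 (tour k) r by rewrite /p' (set_nth_default x0).
  have dne : cur != p' by rewrite Hcur p'E; apply: tour_next.
  have dD : dist t cur p' <= D := dist_leD _ _ _.
  have ed : eta <= dist t cur p' := eta_le dne.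
  move=> _.
  case: (eqVneq ph qj) => Epq.
    subst ph; rewrite eqxx in Ekk.
    have mkp : mk kj != pos.
      by apply: contra Hc => /eqP E; rewrite Hcur -/k -posj E.
    have Hell := ell_step (Hmk _ qjL) mkp.
    rewrite -Hcur -p'E -/k -/r in Hell.
    case: ifP => HDa; rewrite /Phi /= Ekk ?eqxx Hell.
      rewrite dlt_nxt_qj.
      have Ld : (L.-1%:R : R) = L%:R - 1.
        by rewrite -[in RHS](prednK (L_gt0 hv hlt)) -natr1 addrK.
      rewrite Ld.
      have P1 : L%:R * D <= L%:R * (acc + dist t cur p') by apply: ler_wpM2l => //; lra.
      have P2 : 0 <= L%:R * ell r by apply: mulr_ge0; [lra | exact: ell_ge0].
      split; lra.
    split; lra.
  have kk : (kj == k) = false by rewrite Ekk eq_sym; exact/negbTE.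
  case: ifP => HDa; rewrite /Phi /= kk.
    have := dlt_nxt Hph Epq; move=> Hd.
    have Hd' : ((dlt ph)%:R : R) = (dlt (ph.+1 %% L))%:R + 1 by rewrite -Hd natr1.
    rewrite Hd' (negbTE Epq); split; lra.
  rewrite (negbTE Epq); split; lra.
set p' := nth cur (tour k) (mk k).
have dD : dist t cur p' <= D := dist_leD _ _ _.
case: (eqVneq ph qj) => Epq.
  subst ph; case: ifP => H2 /= Hc'.
    by rewrite /Phi /= eqxx dlt_qj; split; lra.
  have E1 : tour kj = [:: j] by apply: (tour_single kin) => //; rewrite ltnNge H2.
  move: Hc'; rewrite /p' -/k.
  have : (mk kj < 1)%N by move: (Hmk _ qjL); rewrite E1.
  by rewrite E1; case: (mk kj) => //= _; rewrite eqxx.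
case: ifP => H2 /= Hc'; rewrite /Phi /=.
  by rewrite (negbTE Epq); split; lra.
have := dlt_nxt Hph Epq; move=> Hd.
have Hd' : ((dlt ph)%:R : R) = (dlt (ph.+1 %% L))%:R + 1 by rewrite -Hd natr1.
rewrite Hd'; split; lra.
Qed.

Notation pw := (alg_walk hn h t tour m0).

Lemma pwE k : pw k = st_cur (sig k). Proof. by []. Qed.
Lemma sigS k : sig k.+1 = stp (sig k). Proof. by rewrite /sig iterS. Qed.

Lemma visit N k : Phi (sig k) <= N%:R * eta ->
  exists k', [/\ (k <= k')%N, pw k' = j & arrival t pw k' - arrival t pw k <= Phi (sig k)].
Proof.
elim: N k => [|N IH] k HP.
  have := Phi_ge (Inv_sig k); have := D_pos; rewrite mul0r in HP; lra.
have PG := Phi_ge (Inv_sig k); have D0 := D_pos.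
case: (eqVneq (pw k) j) => Hk.
  by exists k; split => //; rewrite subrr; lra.
case: (eqVneq (pw k.+1) j) => Hk1.
  exists k.+1; split => //; rewrite arrS.
  have := dist_leD t (pw k) (pw k.+1); lra.
have Hk1' : st_cur (stp (sig k)) != j by rewrite -sigS.
have [H1 H2] := Phi_dec (Inv_sig k) Hk Hk1'.
rewrite -sigS in H1 H2.
have HP' : Phi (sig k.+1) <= N%:R * eta by move: HP; rewrite -natr1 mulrDl mul1r; lra.
case: (IH _ HP') => k' [kk' pk' ak']; exists k'; split => //; first exact: ltnW.
move: ak'; rewrite arrS; lra.
Qed.

Lemma visit_after k : exists k', [/\ (k < k')%N, pw k' = j &
  arrival t pw k' - arrival t pw k <= D + (5 * L%:R * D + 3 * L%:R * Lamj)].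
Proof.
set N := (Num.trunc (Phi (sig k.+1) / eta)).+1.
have et0 := eta_pos.
have HN : Phi (sig k.+1) <= N%:R * eta.
  rewrite -ler_pdivrMr //; apply/ltW; exact: truncnS_gt.
case: (visit HN) => k' [kk' pk' ak']; exists k'; split => //.
have := Phi_le (Inv_sig k.+1); have := dist_leD t (pw k) (pw k.+1).
move: ak'; rewrite arrS; lra.
Qed.
End Target.

Notation pw := (alg_walk hn h t tour m0).

Lemma class_pos i : exists qi pos, [/\ (qi < L)%N, i \in Vcls hn h (nth 0%N ne qi),
  (pos < size (tour (nth 0%N ne qi)))%N & nth x0 (tour (nth 0%N ne qi)) pos = i].
Proof.
case: (class_ne hv hlt i) => qi qL iV.
have im := tour_mem (ne_in qL) iV.
by exists qi, (index i (tour (nth 0%N ne qi))); split; rewrite ?index_mem ?nth_index.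
Qed.

Lemma pw_visits i k : exists k', (k < k')%N /\ pw k' = i.
Proof.
case: (class_pos i) => qi [pos [qL iV pL pE]].
by case: (visit_after qL iV pL pE k) => k' [H1 H2 _]; exists k'.
Qed.

Lemma pw_unb x : exists k, x < arrival t pw k.
Proof. exact: (unbounded hv fl_neq (pw_visits _) (pw_visits _)). Qed.

Lemma alg_bound (p : nat -> 'I_n) (M : R) : p 0%N = first_pt hn ->
  (forall i x, 0 <= x -> height h t p i x <= M) ->
  forall i x, 0 <= x -> height h t pw i x <= 24 * L%:R * M.
Proof.
move=> p0 HM i x xpos.
case: (class_pos i) => qi [pos [qL iV pL pE]].
set k := nth 0%N ne qi in iV pL pE.
have kin : k \in ne := ne_in qL.
set Lk := Lam t x0 (tour k).
have M0 := M_ge0 hv HM i.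
have L1 := L_ge1.
have D0 := D_pos.
have hm := hmin_pos hn hv.
set rho := 2 ^+ k * hmin hn h.
have rho0 : 0 < rho by rewrite /rho mulr_gt0 // pow2_pos.
have Hr : forall i', i' \in Vcls hn h k -> rho <= h i'.
  by move=> i'; rewrite inE => /andP [].
have ihi : h i < 2 * rho by move: iV; rewrite inE exprS -mulrA => /andP [].
have Vne : Vcls hn h k != finset.set0 by apply/set0Pn; exists i.
case: (walk_tree hv HM rho0 Vne Hr) => E [ET EW].
have LkE : Lk <= 2 * (M / rho) by apply: le_trans (Lam_bound kin ET) _; rewrite ler_pM2l.
have Lk0 : 0 <= Lk by rewrite /Lk /Lam; apply: sumr_ge0 => l _; exact: (dl_ge0 hv).
have G0 : 0 <= D + (5 * L%:R * D + 3 * L%:R * Lk).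
  have : 0 <= L%:R * D by apply: mulr_ge0; lra.
  have : 0 <= L%:R * Lk by apply: mulr_ge0; lra.
  lra.
have := gap_height hv G0 (visit_after qL iV pL pE) pw_unb xpos => Hh.
apply: le_trans Hh _.
have hDM : h i * D <= 2 * M.
  have := DmaxM hv HM; rewrite p0 => H; apply: le_trans H.
  by apply: ler_wpM2r; [exact: ltW | exact: (hmax_ge hn hv i)].
have hLM : h i * Lk <= 4 * M.
  have : h i * Lk <= 2 * rho * (2 * (M / rho)).
    apply: ler_pM => //; [exact/ltW/(hpos hv) | exact: ltW].
  have -> : 2 * rho * (2 * (M / rho)) = 4 * M by field; rewrite gt_eqF.
  done.
have E1 : h i * (D + (5 * L%:R * D + 3 * L%:R * Lk)) =
  h i * D + 5 * L%:R * (h i * D) + 3 * L%:R * (h i * Lk) by ring.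
rewrite E1.
have P1 : L%:R * (h i * D) <= L%:R * (2 * M) by apply: ler_wpM2l => //; lra.
have P2 : L%:R * (h i * Lk) <= L%:R * (4 * M) by apply: ler_wpM2l => //; lra.
have P3 : M <= L%:R * M by rewrite ler_peMl.
lra.
Qed.
End TourFacts.

Unset Implicit Arguments.
Theorem theorem5 :
  exists c : Rdefinitions.R, 0 < c /\
  forall (n : nat) (hn : (1 < n)%N) (h : 'I_n -> Rdefinitions.R)
         (t : 'I_n -> 'I_n -> Rdefinitions.R),
    valid_instance h t ->
    hmin hn h < hmax hn h ->
    forall (tour : nat -> seq 'I_n) (m0 : nat -> nat),
      alg_choices hn h t tour m0 ->
      (MH h t (alg_walk hn h t tour m0)
        <= (c * log2 (Num.ceil (hmax hn h / hmin hn h))%:~R)%:E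
             * OPT h t (first_pt hn))%E.
Proof.
exists 48; split; first lra.
move=> n hn h t hv hlt tour m0 Hch.
set lg := log2 _.
set K := 48 * lg.
have Lle := L_le hv hlt; rewrite -/lg in Lle.
have L0 := L_gt0 hv hlt.
have L1 : (1 : Rdefinitions.R) <= (size (ne_cls hn h))%:R by rewrite ler1n.
have K0 : 0 < K by rewrite /K; lra.
have key : forall p : nat -> 'I_n, p 0%N = first_pt hn ->
    (MH h t (alg_walk hn h t tour m0) <= K%:E * MH h t p)%E.
  move=> p p0.
  case E: (MH h t p) => [M| |].
  - have HM i x : 0 <= x -> height h t p i x <= M.
      move=> x0; rewrite -lee_fin -E; apply: ereal_sup_ubound; by exists i, x.
    have M0 := M_ge0 hv HM (first_pt hn).
    rewrite -EFinM; apply: ge_ereal_sup => z [i [x [x0 ->]]]; rewrite lee_fin.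
    apply: le_trans (alg_bound hv Hch hlt p0 HM i x0) _.
    rewrite /K; have : (size (ne_cls hn h))%:R * M <= 2 * lg * M by apply: ler_wpM2r.
    lra.
  - by rewrite mulry gtr0_sg // mul1e leey.
  - have : ((height h t p (first_pt hn) 0)%:E <= MH h t p)%E.
      by apply: ereal_sup_ubound; exists (first_pt hn), 0.
    by rewrite E leeNy_eq.
have H1 : ((K^-1)%:E * MH h t (alg_walk hn h t tour m0) <= OPT h t (first_pt hn))%E.
  apply/ereal_infP => y [p p0 <-]; rewrite lee_pdivrMl //; exact: key.
have -> : MH h t (alg_walk hn h t tour m0) =
    (K%:E * ((K^-1)%:E * MH h t (alg_walk hn h t tour m0)))%E.
  by rewrite muleA -EFinM mulfV ?gt_eqF // mul1e.
by apply: lee_wpmul2l => //; rewrite lee_fin ltW.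
Qed.
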